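(* Let $N$ be a positive integer, $x\in\mathbb{T}$ irrational, and $D=\{x,2x,\dots,Nx\}$. Then $\mathrm{Md}_{\mathbb{T}}(D)\le 1/(N+1)$, and there is no Borel set $A\subset\mathbb{T}$ with $(A-A)\cap D=\emptyset$ and $\mu(A)=1/(N+1)$.
   Context: $\mathbb{T}=\mathbb{R}/\mathbb{Z}$ with Haar probability measure $\mu$; ''$x$ irrational'' means $x\notin\mathbb{Q}/\mathbb{Z}$. $\mathrm{Md}_{\mathbb{T}}(D)=\sup\{\mu(A): A\subset\mathbb{T}\text{ Borel},\ (A-A)\cap D=\emptyset\}$. *)

(* Defs.v *)
From HB Require Import structures.
From mathcomp Require Import all_boot all_order all_algebra.
From mathcomp Require Import all_classical all_reals all_analysis.
Set Implicit Arguments. Unset Strict Implicit. Unset Printing Implicit Defensive.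
Import Order.TTheory GRing.Theory Num.Theory.
Local Open Scope classical_set_scope.
Local Open Scope ring_scope.

(* The circle T = R/Z is modelled by the fundamental domain [0,1) in R:
   a point of T is its unique representative in [0,1), the projection
   R -> T is [frac], subtraction in T is [frac (a - b)], Borel subsets of
   T are Borel subsets of R contained in [0,1), and the Haar probability
   measure on T is Lebesgue measure restricted to [0,1). *)

Definition frac {R : realType} (x : R) : R := x - (Num.floor x)%:~R.

Definition irrationalT {R : realType} (x : R) : Prop :=
  forall q : rat, x != ratr q.

Definition Dset {R : realType} (N : nat) (x : R) : set R :=
  [set frac (k%:R * x) | k in [set k : nat | (1 <= k <= N)%N]].

Definition admissible {R : realType} (D : set R) (A : set (measurableTypeR R)) : Prop :=
  measurable A /\ A `<=` (`[(0:R), (1:R)[) /\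
  (forall a b, A a -> A b -> ~ D (frac (a - b))).

Definition MdT {R : realType} (D : set R) : \bar R :=
  ereal_sup [set (@lebesgue_measure R A) | A in admissible D].

(* Main.v *)
Require Import Defs.
From HB Require Import structures.
From mathcomp Require Import all_boot all_order all_algebra.
From mathcomp Require Import all_classical all_reals all_analysis.
From mathcomp Require Import measurable_realfun lebesgue_integral_differentiation.
From mathcomp Require Import ring lra zify.
Require Import Defs.
Import numFieldNormedType.Exports.
Set Implicit Arguments. Unset Strict Implicit. Unset Printing Implicit Defensive.
Import Order.TTheory GRing.Theory Num.Theory.
Local Open Scope classical_set_scope.
Local Open Scope ring_scope.

Definition shiftS {R : realType} (s : R) (B : set R) : set R := [set z | B (z - s)].

Lemma measurable_fun_subc {R : realType} (s : R) :
  measurable_fun [set: measurableTypeR R] (fun z : R => z - s).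
Proof.
exact: (measurable_funB (@measurable_id _ _ setT) (measurable_cst s)).
Qed.

Lemma measurable_shiftS {R : realType} (s : R) (B : set (measurableTypeR R)) :
  measurable B -> measurable (shiftS s B : set (measurableTypeR R)).
Proof.
move=> mB; rewrite -[shiftS s B]setTI.
exact: (measurable_fun_subc s measurableT mB).
Qed.

Definition shm {R : realType} (s : R) : set (measurableTypeR R) -> \bar R :=
  fun B => lebesgue_measure (shiftS s B).

Section shm.
Context {R : realType} (s : R).
Let shm0 : shm s set0 = 0%E.
Proof. by rewrite /shm /shiftS /= -[X in lebesgue_measure X]/(@set0 R) measure0. Qed.
Let shm_ge0 A : (0 <= shm s A)%E.
Proof. exact: measure_ge0. Qed.
Let shm_sa : semi_sigma_additive (shm s).
Proof.
move=> F mF tF mUF; rewrite /shm.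
have -> : shiftS s (\bigcup_n F n) = \bigcup_n shiftS s (F n).
  by apply/seteqP; split => z /= [n _ h]; exists n.
apply: measure_semi_sigma_additive.
- by move=> n; exact: measurable_shiftS.
- apply/trivIsetP => /= i j _ _ ij.
  move/trivIsetP : tF => /(_ _ _ I I ij) h.
  apply/seteqP; split => // z [h1 h2].
  have : (F i `&` F j) (z - s) by [].
  by rewrite h.
- have -> : \bigcup_n shiftS s (F n) = shiftS s (\bigcup_n F n).
    by apply/seteqP; split => z /= [n _ h]; exists n.
  exact: measurable_shiftS.
Qed.
HB.instance Definition _ := isMeasure.Build _ _ _ (shm s) shm0 shm_ge0 shm_sa.
End shm.

Lemma shiftS_measure {R : realType} (s : R) (B : set (measurableTypeR R)) :
  measurable B -> lebesgue_measure (shiftS s B) = lebesgue_measure B.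
Proof.
move=> mB; apply/esym.
have := @lebesgue_measure_unique R (shm s) _ B mB; apply.
move=> X [[a b] _ <-]; rewrite /shm /=.
have -> : shm s `]a, b]%classic = lebesgue_measure (shiftS s `]a, b]%classic) by [].
have -> : shiftS s `]a, b]%classic = `]a + s, b + s]%classic.
  apply/seteqP; split => z; rewrite /shiftS /= !in_itv /=.
    by rewrite ltrBrDr lerBlDr.
  by rewrite ltrBrDr lerBlDr.
rewrite !lebesgue_measure_itv /= !lte_fin ltrD2r.
by case: ifP => // _; rewrite -!EFinD; congr (_%:E); ring.
Qed.

Definition isint {R : realType} (r : R) := exists m : int, r = m%:~R.

Lemma frac_ge0 {R : realType} (z : R) : 0 <= frac z.
Proof. by rewrite /frac subr_ge0 floor_le_tmp. Qed.

Lemma frac_lt1 {R : realType} (z : R) : frac z < 1.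
Proof.
rewrite /frac ltrBlDl.
by have := lt_succ_floor z; rewrite intrD.
Qed.

Lemma frac_id {R : realType} (z : R) : 0 <= z < 1 -> frac z = z.
Proof.
move=> hz; rewrite /frac (_ : Num.floor z = 0) ?subr0 //.
by apply: floor_def; rewrite add0r.
Qed.

Lemma floorD_int {R : realType} (z : R) (m : int) :
  Num.floor (z + m%:~R) = Num.floor z + m.
Proof.
apply: floor_def; rewrite !intrD -addrA (addrC m%:~R) addrA.
by rewrite lerD2r ltrD2r floor_le_tmp /= -intrD lt_succ_floor.
Qed.

Lemma frac_addint {R : realType} (z r : R) : isint r -> frac (z + r) = frac z.
Proof.
by move=> [m ->]; rewrite /frac floorD_int intrD opprD addrACA subrr addr0.
Qed.

Lemma frac_eqP {R : realType} (a b : R) : frac a = frac b <-> isint (a - b).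
Proof.
split.
  rewrite /frac => h; exists (Num.floor a - Num.floor b).
  rewrite intrB; move: h; lra.
move=> hi; rewrite -(frac_addint b hi); congr frac; ring.
Qed.

Lemma isintN {R : realType} (r : R) : isint r -> isint (- r).
Proof. by move=> [m ->]; exists (- m); rewrite mulrNz. Qed.
Lemma isintD {R : realType} (r s : R) : isint r -> isint s -> isint (r + s).
Proof. by move=> [m ->] [n ->]; exists (m + n); rewrite intrD. Qed.
Lemma isint_int {R : realType} (m : int) : isint (m%:~R : R).
Proof. by exists m. Qed.
Lemma isint_frac {R : realType} (z : R) : isint (z - frac z).
Proof. by exists (Num.floor z); rewrite /frac; ring. Qed.

Notation mR R := (measurableTypeR R).
Definition per {R : realType} (A : set R) : set (mR R) := [set z | A (frac z)].
Definition I01 {R : realType} : set (mR R) := `[(0:R), (1:R)[%classic.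

Lemma I01P {R : realType} (z : R) : I01 z <-> 0 <= z < 1.
Proof. by rewrite /I01 /= in_itv /=. Qed.

Lemma measurable_I01 {R : realType} : measurable (@I01 R).
Proof. exact: measurable_itv. Qed.

Lemma per_bigcup {R : realType} (A : set (mR R)) : A `<=` I01 ->
  per A = \bigcup_(m : int) shiftS (m%:~R) A.
Proof.
move=> AI; apply/seteqP; split => z /=.
  move=> h; exists (Num.floor z) => //.
move=> [m _ h]; rewrite /shiftS /= in h.
have hz := AI _ h; move/I01P: hz => hz.
have -> : z = (z - m%:~R) + m%:~R by ring.
rewrite /per /= frac_addint ?frac_id //; exact: isint_int.
Qed.

Lemma measurable_per {R : realType} (A : set (mR R)) : measurable A -> A `<=` I01 ->
  measurable (per A).
Proof.
move=> mA AI; rewrite per_bigcup //.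
apply: countable_bigcupT_measurable; first exact: countableP.
by move=> m; exact: measurable_shiftS.
Qed.

Lemma per_I01 {R : realType} (A : set (mR R)) : A `<=` I01 -> per A `&` I01 = A.
Proof.
move=> AI; apply/seteqP; split => z; rewrite /per /=.
  by move=> [h /I01P hz]; rewrite frac_id in h.
by move=> h; split; [rewrite /per /= frac_id //; apply/I01P/AI | exact: AI].
Qed.

Lemma shiftS_per_int {R : realType} (A : set (mR R)) (r : R) : isint r ->
  shiftS r (per A) = per A.
Proof.
move=> hr; apply/seteqP; split => z; rewrite /shiftS /per /=.
  by rewrite (frac_addint _ (isintN hr)).
by rewrite (frac_addint _ (isintN hr)).
Qed.

Lemma shiftS_comp {R : realType} (s t : R) (B : set R) :
  shiftS s (shiftS t B) = shiftS (s + t) B.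
Proof. by apply/seteqP; split => z; rewrite /shiftS /= opprD addrA. Qed.

Lemma shiftS0 {R : realType} (B : set R) : shiftS 0 B = B.
Proof. by apply/seteqP; split => z; rewrite /shiftS /= subr0. Qed.

Lemma shiftSI {R : realType} (s : R) (B C : set R) :
  shiftS s (B `&` C) = shiftS s B `&` shiftS s C.
Proof. by []. Qed.
Lemma shiftSU {R : realType} (s : R) (B C : set R) :
  shiftS s (B `|` C) = shiftS s B `|` shiftS s C.
Proof. by []. Qed.
Lemma shiftSD {R : realType} (s : R) (B C : set R) :
  shiftS s (B `\` C) = shiftS s B `\` shiftS s C.
Proof. by []. Qed.

Definition Ico {R : realType} (a b : R) : set (mR R) := `[a, b[%classic.
Lemma IcoP {R : realType} (a b z : R) : Ico a b z <-> a <= z < b.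
Proof. by rewrite /Ico /= in_itv /=. Qed.
Lemma measurable_Ico {R : realType} (a b : R) : measurable (Ico a b).
Proof. exact: measurable_itv. Qed.
Lemma shiftS_Ico {R : realType} (s a b : R) : shiftS s (Ico a b) = Ico (a + s) (b + s).
Proof.
apply/seteqP; split => z; rewrite /shiftS /= => /IcoP h; apply/IcoP; move: h; lra.
Qed.
Lemma I01E {R : realType} : @I01 R = Ico 0 1. Proof. by []. Qed.

Lemma window0 {R : realType} (A : set (mR R)) (d : R) : measurable A -> A `<=` I01 ->
  0 <= d < 1 -> lebesgue_measure (per A `&` Ico d (d + 1)) = lebesgue_measure A.
Proof.
move=> mA AI hd.
have E1 : per A `&` Ico d (d + 1) = (A `&` Ico d 1) `|` shiftS 1 (A `&` Ico 0 d).
  apply/seteqP; split => z.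
    move=> [hp /IcoP hz]; rewrite /per /= in hp.
    have [hz1|hz1] := ltP z 1.
      by left; split; [rewrite frac_id in hp => //; lra | apply/IcoP; lra].
    right; rewrite /shiftS /=; split; last by apply/IcoP; lra.
    have : frac z = frac (z - 1) by apply/frac_eqP; exists 1; rewrite /=; ring.
    by move=> e; rewrite e frac_id in hp => //; lra.
  move=> [[h /IcoP hz]|]; rewrite /shiftS /=.
    by split; [rewrite /per /= frac_id //; lra | apply/IcoP; lra].
  move=> [h /IcoP hz]; split; last by apply/IcoP; lra.
  have : frac z = frac (z - 1) by apply/frac_eqP; exists 1; rewrite /=; ring.
  by move=> e; rewrite /per /= e frac_id //; lra.
have E2 : A = (A `&` Ico d 1) `|` (A `&` Ico 0 d).
  apply/seteqP; split => z; last by move=> [[]|[]].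
  move=> h; have /I01P hz := AI _ h.
  have [hzd|hzd] := ltP z d; [right|left]; split => //; apply/IcoP; lra.
rewrite E1 measureU; last first.
- apply/seteqP; split => // z [[_ /IcoP h1]]; rewrite /shiftS /= => [[_ /IcoP h2]]; lra.
- by apply: measurable_shiftS; apply: measurableI => //; exact: measurable_Ico.
- by apply: measurableI => //; exact: measurable_Ico.
rewrite /=. rewrite shiftS_measure; last by apply: measurableI => //; exact: measurable_Ico.
rewrite {3}E2 measureU //.
- by apply: measurableI => //; exact: measurable_Ico.
- by apply: measurableI => //; exact: measurable_Ico.
- apply/seteqP; split => // z [[_ /IcoP h1] [_ /IcoP h2]]; lra.
Qed.

Lemma window {R : realType} (A : set (mR R)) (c : R) : measurable A -> A `<=` I01 ->
  lebesgue_measure (per A `&` Ico c (c + 1)) = lebesgue_measure A.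
Proof.
move=> mA AI.
set n : R := (Num.floor c)%:~R.
have hd : 0 <= c - n < 1 by rewrite /n; have := frac_ge0 c; have := frac_lt1 c; rewrite /frac; lra.
rewrite -(window0 mA AI hd) -[in RHS](shiftS_measure n); last first.
  by apply: measurableI; [exact: measurable_per | exact: measurable_Ico].
rewrite shiftSI shiftS_per_int; last exact: isint_int.
rewrite shiftS_Ico; congr (lebesgue_measure (_ `&` Ico _ _)); ring.
Qed.

Lemma measure_shift_per {R : realType} (A : set (mR R)) (t : R) : measurable A -> A `<=` I01 ->
  lebesgue_measure (I01 `&` shiftS t (per A)) = lebesgue_measure A.
Proof.
move=> mA AI.
rewrite -(window (- t) mA AI) -[in RHS](shiftS_measure t); last first.
  by apply: measurableI; [exact: measurable_per | exact: measurable_Ico].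
rewrite shiftSI shiftS_Ico setIC I01E; congr (lebesgue_measure (_ `&` Ico _ _)); ring.
Qed.

Lemma adm_noint {R : realType} (N : nat) (x : R) (A : set (mR R)) a b k :
  admissible (Dset N x) A -> A a -> A b -> (1 <= k <= N)%N ->
  ~ isint (a - b - k%:R * x).
Proof.
move=> [_ [_ hA]] ha hb hk hi; apply: (hA a b ha hb).
exists k => //; apply/frac_eqP.
have -> : k%:R * x - (a - b) = - (a - b - k%:R * x) by ring.
exact: isintN.
Qed.

Definition Bk {R : realType} (A : set (mR R)) (t : R) : set (mR R) :=
  I01 `&` shiftS t (per A).

Lemma Bk_disj {R : realType} (N : nat) (x : R) (A : set (mR R)) (i j : nat) :
  admissible (Dset N x) A -> (i < j)%N -> (j - i <= N)%N ->
  Bk A (i%:R * x) `&` Bk A (j%:R * x) = set0.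
Proof.
move=> adm hij hjN; apply/seteqP; split => // z [[_ ha] [_ hb]].
rewrite /shiftS /per /= in ha hb.
apply: (adm_noint adm ha hb (k := (j - i)%N)).
  by rewrite subn_gt0 hij hjN.
have -> : frac (z - i%:R * x) - frac (z - j%:R * x) - (j - i)%N%:R * x =
  - ((z - i%:R * x) - frac (z - i%:R * x)) + ((z - j%:R * x) - frac (z - j%:R * x)).
  by rewrite natrB ?(ltnW hij) //; ring.
by apply: isintD; [apply: isintN|]; exact: isint_frac.
Qed.

Lemma measure_I01 {R : realType} : lebesgue_measure (@I01 R) = 1%E.
Proof. by rewrite /I01 lebesgue_measure_itv /= lte_fin ltr01 sube0. Qed.

Lemma measurable_Bk {R : realType} (A : set (mR R)) t : measurable A -> A `<=` I01 ->
  measurable (Bk A t).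
Proof.
move=> mA AI; apply: measurableI; first exact: measurable_I01.
by apply: measurable_shiftS; exact: measurable_per.
Qed.

Lemma adm_fin {R : realType} (D : set R) (A : set (mR R)) : admissible D A ->
  lebesgue_measure A = (fine (lebesgue_measure A))%:E /\ 0 <= fine (lebesgue_measure A).
Proof.
move=> [mA [AI _]].
have h1 : (lebesgue_measure A <= 1)%E by rewrite -measure_I01; apply: le_measure => //; rewrite inE //; exact: measurable_I01.
have h0 : (0 <= lebesgue_measure A)%E := measure_ge0 _ _.
have hf : lebesgue_measure A \is a fin_num by rewrite ge0_fin_numE // (le_lt_trans h1) // ltry.
split; first by rewrite fineK.
by rewrite fine_ge0.
Qed.

Definition Un {R : realType} (A : set (mR R)) (x : R) (n : nat) : set (mR R) :=
  \big[setU/set0]_(i < n) Bk A (i%:R * x).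

Lemma Un_measure {R : realType} (N : nat) (x : R) (A : set (mR R)) :
  admissible (Dset N x) A ->
  lebesgue_measure (Un A x N.+1) = ((fine (lebesgue_measure A)) *+ N.+1)%:E.
Proof.
move=> adm; have [mA [AI _]] := adm.
rewrite /Un measure_bigsetU_ord; last first.
- apply/trivIsetP => i j _ _ ij.
  have [hlt|hlt] := ltnP i j.
    apply: (Bk_disj adm hlt); have := ltn_ord j; lia.
  have hji : (j < i)%N by rewrite ltn_neqAle eq_sym ij hlt.
  rewrite setIC; apply: (Bk_disj adm hji); have := ltn_ord i; lia.
- by move=> i; exact: measurable_Bk.
under eq_bigr do rewrite /Bk /= (measure_shift_per _ mA AI).
have [-> _] := adm_fin adm.
by rewrite sumEFin sumr_const card_ord.
Qed.

Lemma Un_sub {R : realType} (A : set (mR R)) x n : Un A x n `<=` I01.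
Proof.
rewrite /Un; elim: n => [|n IH]; first by rewrite big_ord0.
by rewrite big_ord_recr /= subUset; split => //; move=> z [].
Qed.

Lemma part1 {R : realType} (N : nat) (x : R) (A : set (mR R)) :
  admissible (Dset N x) A -> fine (lebesgue_measure A) *+ N.+1 <= 1.
Proof.
move=> adm; have [mA [AI _]] := adm.
have : (lebesgue_measure (Un A x N.+1) <= 1)%E.
  rewrite -measure_I01; apply: le_measure.
  - by rewrite inE; apply: bigsetU_measurable => i _; exact: measurable_Bk.
  - by rewrite inE; exact: measurable_I01.
  - exact: Un_sub.
by rewrite Un_measure // lee_fin.
Qed.

Lemma near_right_e {R : realType} (Q : R -> Prop) :
  (\forall r \near 0^'+, Q r) -> exists e : R, 0 < e /\ forall r, 0 < r < e -> Q r.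
Proof.
move=> /nbhs_ballP [e /= e0 H]; exists e; split => // r /andP [r0 re].
apply: H => //; rewrite /ball /= sub0r normrN gtr0_norm //.
Qed.

Lemma ratio_fin {R : realType} (P : set (mR R)) (z r : R) : measurable P -> 0 < r ->
  (lebesgue_measure (P `&` ball z r) * (lebesgue_measure (ball z r))^-1)%E =
  (fine (lebesgue_measure (P `&` ball z r)) / (r *+ 2))%:E.
Proof.
move=> mP r0.
have hb : measurable (ball z r : set (mR R)) by exact: measurable_ball.
have h1 : (lebesgue_measure (P `&` ball z r) <= (r *+ 2)%:E)%E.
  rewrite -(lebesgue_measure_ball z (ltW r0)); apply: le_measure; rewrite ?inE //.
  exact: measurableI.
have hf : lebesgue_measure (P `&` ball z r) \is a fin_num.
  by rewrite ge0_fin_numE // (le_lt_trans h1) // ltry.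
rewrite lebesgue_measure_ball ?(ltW r0) // -{1}(fineK hf) inver.
have -> : (r *+ 2 == 0) = false by apply/negbTE; rewrite mulrn_eq0 /= gt_eqF.
by rewrite -EFinM.
Qed.

Lemma dens_gt {R : realType} (P : set (mR R)) (z c l : R) : measurable P ->
  (lebesgue_measure (P `&` ball z r) * (lebesgue_measure (ball z r))^-1)%E
     @[r --> 0^'+] --> l%:E -> c < l ->
  exists e : R, 0 < e /\ forall r, 0 < r < e ->
    c * (r *+ 2) < fine (lebesgue_measure (P `&` ball z r)).
Proof.
move=> mP hc cl.
have := hc _ (open_ereal_gt' (y := c%:E) (x := l%:E) _); rewrite lte_fin => /(_ cl).
move=> /near_right_e [e [e0 H]]; exists e; split => // r hr.
have r0 : 0 < r by case/andP: hr.
have := H r hr; rewrite /= ratio_fin // lte_fin ltr_pdivlMr //.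
by rewrite mulrn_wgt0.
Qed.

Lemma dens_lt {R : realType} (P : set (mR R)) (z c l : R) : measurable P ->
  (lebesgue_measure (P `&` ball z r) * (lebesgue_measure (ball z r))^-1)%E
     @[r --> 0^'+] --> l%:E -> l < c ->
  exists e : R, 0 < e /\ forall r, 0 < r < e ->
    fine (lebesgue_measure (P `&` ball z r)) < c * (r *+ 2).
Proof.
move=> mP hc cl.
have := hc _ (open_ereal_lt' (y := c%:E) (x := l%:E) _); rewrite lte_fin => /(_ cl).
move=> /near_right_e [e [e0 H]]; exists e; split => // r hr.
have r0 : 0 < r by case/andP: hr.
have := H r hr; rewrite /= ratio_fin // lte_fin ltr_pdivrMr //.
by rewrite mulrn_wgt0.
Qed.

Definition SD {R : realType} (X Y : set (mR R)) : set (mR R) := (X `\` Y) `|` (Y `\` X).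
Definition inv {R : realType} (P : set (mR R)) (t : R) :=
  (@lebesgue_measure R).-negligible (SD (shiftS t P) P).

Lemma negl_shift {R : realType} (M : set (mR R)) t :
  (@lebesgue_measure R).-negligible M -> (@lebesgue_measure R).-negligible (shiftS t M).
Proof.
move=> [B [mB B0 MB]]; exists (shiftS t B); split.
- exact: measurable_shiftS.
- by rewrite /= shiftS_measure.
- by move=> z; apply: MB.
Qed.

Lemma inv_int {R : realType} (A : set (mR R)) (m : R) : isint m -> inv (per A) m.
Proof.
move=> hm; rewrite /inv shiftS_per_int // /SD setDv setU0.
exact: negligible_set0.
Qed.

Lemma inv_add {R : realType} (P : set (mR R)) s t : inv P s -> inv P t -> inv P (s + t).
Proof.
move=> hs ht; apply: (negligibleS _ (negligibleU (negl_shift s ht) hs)).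
move=> z; rewrite /SD /shiftS /= opprD addrA.
by case: (pselect (P (z - s))) => h; tauto.
Qed.

Lemma inv_opp {R : realType} (P : set (mR R)) t : inv P t -> inv P (- t).
Proof.
move=> ht; apply: (negligibleS _ (negl_shift (- t) ht)).
by move=> z; rewrite /SD /shiftS /= !opprK addrK; tauto.
Qed.

Lemma shiftS_ball {R : realType} (t p r : R) :
  shiftS t (ball p r : set (mR R)) = ball (p + t) r.
Proof.
by apply/seteqP; split => z; rewrite /shiftS /ball /= (_ : p - (z - t) = p + t - z) //; ring.
Qed.

Lemma SD_le {R : realType} (S T X : set (mR R)) :
  measurable S -> measurable T -> measurable X ->
  (@lebesgue_measure R).-negligible (SD S T) ->
  (lebesgue_measure (S `&` X) <= lebesgue_measure (T `&` X))%E.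
Proof.
move=> mS mT mX [M [mM M0 SDM]].
apply: (@le_trans _ _ (lebesgue_measure ((T `&` X) `|` M))).
  apply: le_measure; rewrite ?inE; first exact: measurableI.
    by apply: measurableU => //; exact: measurableI.
  move=> z [hS hX]; case: (pselect (T z)) => hT; first by left.
  by right; apply: SDM; left.
apply: (le_trans (measureU2 _ _ _)) => //; last by rewrite /= M0 adde0.
exact: measurableI.
Qed.

Lemma SDC {R : realType} (S T : set (mR R)) : SD S T = SD T S.
Proof. by rewrite /SD setUC. Qed.

Lemma inv_meas {R : realType} (P : set (mR R)) t p r : measurable P -> inv P t ->
  lebesgue_measure (P `&` ball (p + t) r) = lebesgue_measure (P `&` ball p r).
Proof.
move=> mP ht.
have mb : forall c, measurable (ball c r : set (mR R)) by move=> c; exact: measurable_ball.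
rewrite -[in RHS](shiftS_measure t); last exact: measurableI.
rewrite shiftSI shiftS_ball; apply/le_anti/andP; split.
  by apply: SD_le => //; [exact: measurable_shiftS | rewrite SDC].
by apply: SD_le => //; exact: measurable_shiftS.
Qed.

Lemma approx_c {R : realType} (y c eta : R) (d e : int) :
  eta != 0 -> d%:~R * y - e%:~R = eta ->
  exists k m : int, `|k%:~R * y - m%:~R - c| < `|eta|.
Proof.
move=> eta0 he.
set n0 := Num.floor (c / eta).
exists (n0 * d), (n0 * e).
have -> : (n0 * d)%:~R * y - (n0 * e)%:~R = n0%:~R * eta.
  by rewrite -he !intrM; ring.
have [h1 h2] : n0%:~R <= c / eta /\ c / eta < n0%:~R + 1.
  by have := floor_itv (c / eta); rewrite intrD => /andP [].
have -> : n0%:~R * eta - c = - (eta * (c / eta - n0%:~R)).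
  by rewrite mulrBr mulrCA divff // mulr1; ring.
rewrite normrN normrM -{2}(mulr1 `|eta|) ltr_pM2l ?normr_gt0 //.
by rewrite ger0_norm ?subr_ge0 //; lra.
Qed.

Lemma dirichlet {R : realType} (y : R) :
  (forall d e : int, d != 0 -> d%:~R * y != e%:~R) ->
  forall c r : R, 0 < r -> exists k m : int, `|k%:~R * y - m%:~R - c| < r.
Proof.
move=> hy c r r0.
set n := Num.trunc (r^-1).
have hM : r^-1 < n.+1%:R by exact: truncnS_gt.
pose g (i : 'I_n.+2) : nat := Num.trunc (n.+1%:R * frac (i%:R * y)).
have glt : forall i, (g i < n.+1)%N.
  move=> i; rewrite /g truncn_lt_nat; last by rewrite mulr_ge0 // frac_ge0.
  by rewrite -{2}(mulr1 n.+1%:R) ltr_pM2l ?frac_lt1 // ltr0n.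
pose f (i : 'I_n.+2) : 'I_n.+1 := inord (g i).
have [i [j [ij fij]]] : exists i j, i != j /\ f i = f j.
  apply: contrapT => hne.
  have finj : injective f.
    move=> i j fij; apply: contrapT => ij; apply: hne; exists i, j; split => //.
    by apply/negP => /eqP.
  by have := leq_card f finj; rewrite !card_ord ltnn.
have gij : g i = g j by have := congr1 val fij; rewrite /f /= !inordK ?glt.
set a := frac (i%:R * y); set b := frac (j%:R * y).
have hab : `|b - a| < r.
  have ha := truncn_itv (mulr_ge0 (ler0n _ n.+1) (frac_ge0 (i%:R * y))).
  have hb := truncn_itv (mulr_ge0 (ler0n _ n.+1) (frac_ge0 (j%:R * y))).
  rewrite -/a -/b in ha hb; rewrite /g -/a -/b in gij; rewrite gij in ha.
  move/andP: ha => [ha1 ha2]; move/andP: hb => [hb1 hb2].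
  have hM0 : 0 < n.+1%:R :> R by rewrite ltr0n.
  have h1 : `|b - a| * n.+1%:R < 1.
    rewrite -[X in _ * X]ger0_norm ?ler0n // -normrM mulrBl.
    rewrite ltr_norml; rewrite !(mulrC _ n.+1%:R); move: ha1 ha2 hb1 hb2.
    rewrite -natr1; lra.
  apply: (lt_trans _ (_ : (n.+1%:R)^-1 < r)); last first.
    by rewrite -(invrK r) ltf_pV2 ?posrE ?invr_gt0.
  by rewrite -div1r ltr_pdivlMr.
have heta : b - a != 0.
  rewrite /a /b /frac; apply/negP => /eqP h0.
  have := hy (j%:Z - i%:Z) (Num.floor (j%:R * y) - Num.floor (i%:R * y)).
  rewrite subr_eq0 eqz_nat (negbTE (_ : val j != val i)) //=; last first.
    by rewrite eq_sym; apply: contra ij => /eqP h; apply/eqP/val_inj.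
  move/(_ isT)/negP; apply; apply/eqP; rewrite !intrB.
  move: h0; rewrite -!pmulrn; lra.
have := @approx_c R y c (b - a) (j%:Z - i%:Z)
   (Num.floor (j%:R * y) - Num.floor (i%:R * y)) heta.
case.
  by rewrite /a /b /frac !intrB -!pmulrn; ring.
move=> k [m hkm]; exists k, m; exact: lt_trans hkm hab.
Qed.

Lemma UnP {R : realType} (A : set (mR R)) (x : R) n z :
  Un A x n z -> exists i, (i < n)%N /\ Bk A (i%:R * x) z.
Proof.
rewrite /Un; elim: n => [|n IH]; first by rewrite big_ord0.
rewrite big_ord_recr /= => -[h|h].
  by have [i [hi hz]] := IH h; exists i; split => //; exact: ltnW.
by exists n; split.
Qed.

Lemma fine_mono {R : realType} (X Y : set (mR R)) : measurable X -> measurable Y ->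
  X `<=` Y -> (lebesgue_measure Y < +oo)%E ->
  fine (lebesgue_measure X) <= fine (lebesgue_measure Y).
Proof.
move=> mX mY XY hY.
have hle : (lebesgue_measure X <= lebesgue_measure Y)%E by apply: le_measure; rewrite ?inE.
apply: fine_le => //; rewrite ge0_fin_numE //; exact: le_lt_trans hY.
Qed.

Lemma step1 {R : realType} (N : nat) (x : R) (A : set (mR R)) :
  admissible (Dset N x) A -> lebesgue_measure A = ((N.+1%:R)^-1)%:E ->
  inv (per A) (N.+1%:R * x).
Proof.
move=> adm hA; have [mA [AI _]] := adm.
set y := N.+1%:R * x; set P := per A; set B := Bk A y.
have mP : measurable P by exact: measurable_per.
have mB : measurable B by exact: measurable_Bk.
have mU : measurable (Un A x N.+1) by apply: bigsetU_measurable => i _; exact: measurable_Bk.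
have hfa : fine (lebesgue_measure A) = (N.+1%:R)^-1 by rewrite hA.
have hU : lebesgue_measure (Un A x N.+1) = 1%E.
  rewrite Un_measure // hfa -(mulr_natr (N.+1%:R^-1)) mulVf //.
have hIU : lebesgue_measure (I01 `\` Un A x N.+1) = 0%E.
  rewrite measureD //; try exact: measurable_I01; last by rewrite /= measure_I01 ltry.
  rewrite setIidr /=; last exact: Un_sub.
  by rewrite hU measure_I01 subee.
have hBA : lebesgue_measure (B `\` A) = 0%E.
  apply/eqP; rewrite -measure_le0 -hIU; apply: le_measure; rewrite ?inE.
  - exact: measurableD.
  - by apply: measurableD => //; exact: measurable_I01.
  move=> z [hB hnA]; split; first by case: hB.
  move=> /UnP [i [hi hz]].
  case: i hi hz => [|i] hi hz.
    apply: hnA; rewrite -(per_I01 AI); move: hz; rewrite /Bk mul0r shiftS0.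
    by rewrite setIC.
  have := Bk_disj adm (_ : (i.+1 < N.+1)%N) (_ : (N.+1 - i.+1 <= N)%N).
  move=> /(_ hi); rewrite subSS leq_subr => /(_ isT) h.
  have hz2 : (Bk A (i.+1%:R * x) `&` Bk A (N.+1%:R * x)) z by split.
  by rewrite h in hz2.
have hB : lebesgue_measure B = lebesgue_measure A by rewrite /B /Bk measure_shift_per.
have hfin : (lebesgue_measure A < +oo)%E by rewrite hA ltry.
have hAB : lebesgue_measure (A `\` B) = 0%E.
  rewrite measureD //=.
  move: hBA; rewrite measureD //=; last by rewrite hB.
  by rewrite hB setIC.
rewrite /inv.
pose E0 := (B `\` A) `|` (A `\` B).
have hE0 : (@lebesgue_measure R).-negligible E0.
  by apply: negligibleU; apply/negligibleP => //; exact: measurableD.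
apply: (negligibleS _ (negligible_bigcup (fun k : nat =>
  negligibleU (negl_shift k%:R hE0) (negl_shift (- k%:R) hE0)))).
move=> z hz.
set m := Num.floor z.
have hw : E0 (z - m%:~R).
  have hw01 : I01 (z - m%:~R) by apply/I01P; have := frac_ge0 z; have := frac_lt1 z; rewrite /frac; lra.
  have ePw : P (z - m%:~R) = P z.
    by rewrite /P /per /= (frac_addint _ (isintN (isint_int m))).
  have ePyw : P (z - m%:~R - y) = P (z - y).
    by rewrite /P /per /= (_ : z - m%:~R - y = (z - y) + - m%:~R) ?(frac_addint _ (isintN (isint_int m))) //; ring.
  have eA : forall w, I01 w -> A w = P w.
    move=> w hw; rewrite /P /per /= frac_id //; exact/I01P.
  rewrite /E0 /B /Bk /shiftS /=.
  rewrite eA // -/P; move: hz; rewrite /SD /shiftS /= -ePw.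
  have -> : P (z - y) = P (z - m%:~R - y) by rewrite ePyw.
  by case: (pselect (P (z - m%:~R))); case: (pselect (P (z - m%:~R - y))); tauto.
case Hm: m hw => [n|n] hw.
  exists n => //; left; rewrite /shiftS /=; exact: hw.
exists n.+1 => //; right; rewrite /shiftS /= opprK.
by move: hw; rewrite NegzE mulrNz opprK.
Qed.

Lemma inv_lin {R : realType} (A : set (mR R)) (y : R) : inv (per A) y ->
  forall k m : int, inv (per A) (k%:~R * y - m%:~R).
Proof.
move=> hy k m; apply: inv_add; last by apply: inv_opp; apply: inv_int; exact: isint_int.
have hn : forall n : nat, inv (per A) (n%:R * y).
  elim=> [|n IH]; first by rewrite mul0r; apply: inv_int; exists 0.
  by rewrite mulrSr mulrDl mul1r; apply: inv_add.
case: k => n; first exact: hn.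
by rewrite NegzE mulrNz mulNr; apply: inv_opp; exact: hn.
Qed.

Lemma irr_y {R : realType} (N : nat) (x : R) : irrationalT x ->
  forall d e : int, d != 0 -> d%:~R * (N.+1%:R * x) != e%:~R.
Proof.
move=> hx d e d0; apply/negP => /eqP h.
have hd : (d%:~R * N.+1%:R : R) != 0 by rewrite mulf_neq0 ?intr_eq0 ?pnatr_eq0.
apply/negP: (hx (e%:~R / (d * N.+1%:Z)%:~R)); apply/negPn/eqP.
rewrite fmorph_div /= !ratr_int intrM.
rewrite -h; field; by rewrite intr_eq0 d0 andbT addrC natr1 pnatr_eq0.
Qed.

Lemma part2 {R : realType} (N : nat) (x : R) (A : set (mR R)) :
  (0 < N)%N -> irrationalT x -> admissible (Dset N x) A ->
  lebesgue_measure A = ((N.+1%:R)^-1)%:E -> False.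
Proof.
move=> hN hx adm hA; have [mA [AI _]] := adm.
set y := N.+1%:R * x; set P := per A.
have mP : measurable P by exact: measurable_per.
have hinv := inv_lin (step1 adm hA).
have hy := @irr_y R N x hx.
have hd := lebesgue_density mP.
rewrite /almost_everywhere in hd.
have APE : forall z, I01 z -> A z <-> P z.
  move=> z hz; rewrite -(per_I01 AI); split; [by case | by move=> ?; split].
have [p [Ap gp]] : exists p, A p /\ (lebesgue_measure (P `&` ball p r) *
    (lebesgue_measure (ball p r))^-1)%E @[r --> 0^'+] --> (\1_P p)%:E.
  apply: contrapT => H.
  have : (@lebesgue_measure R).-negligible A.
    by apply: (negligibleS _ hd) => z Az gz; apply: H; exists z.
  move/(negligibleP _ mA); rewrite /= hA => -[] /eqP; by rewrite invr_eq0 pnatr_eq0.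
have hIA : lebesgue_measure (I01 `\` A) != 0%E.
  rewrite measureD //=; first last.
  - by rewrite measure_I01 ltry.
  - exact: measurable_I01.
  rewrite setIidr // measure_I01 hA -EFinB eqe subr_eq0 eq_sym invr_eq1 pnatr_eq1.
  by rewrite eqSS -lt0n hN.
have [q [[Iq nAq] gq]] : exists q, (I01 `\` A) q /\ (lebesgue_measure (P `&` ball q r) *
    (lebesgue_measure (ball q r))^-1)%E @[r --> 0^'+] --> (\1_P q)%:E.
  apply: contrapT => Hc; apply/negP: hIA; apply/negPn/eqP/negligibleP.
    by apply: measurableD => //; exact: measurable_I01.
  by apply: (negligibleS _ hd) => z Az gz; apply: Hc; exists z.
have Pp : P p by apply/(APE p (AI p Ap)).
have nPq : ~ P q by move=> /(APE q Iq).
have gp' : (lebesgue_measure (P `&` ball p r) *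
    (lebesgue_measure (ball p r))^-1)%E @[r --> 0^'+] --> (1:R)%:E.
  by move: gp; rewrite indicE mem_set.
have gq' : (lebesgue_measure (P `&` ball q r) *
    (lebesgue_measure (ball q r))^-1)%E @[r --> 0^'+] --> (0:R)%:E.
  by move: gq; rewrite indicE memNset.
have h34 : (3/4 : R) < 1 by lra.
have h14 : (0 : R) < 1/4 by lra.
have [e1 [e10 He1]] := dens_gt mP gp' h34.
have [e2 [e20 He2]] := dens_lt mP gq' h14.
have [r [r0 [r1 r2]]] : exists r : R, 0 < r /\ r < e1 /\ r * 2 < e2.
  have [h|h] := leP e1 e2; [exists (e1 / 4)|exists (e2 / 4)]; lra.
have [k [m hkm]] := dirichlet hy (q - p) r0.
set t := k%:~R * y - m%:~R.
have h4 := inv_meas p r mP (hinv k m).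
have mb : forall c s, measurable (ball c s : set (mR R)) by move=> c s; exact: measurable_ball.
have h3 : fine (lebesgue_measure (P `&` ball (p + t) r)) <=
          fine (lebesgue_measure (P `&` ball q (r * 2))).
  apply: fine_mono; [exact: measurableI|exact: measurableI| |].
    move=> z [Pz bz]; split => //; move: bz hkm; rewrite /ball /= -/t.
    rewrite !ltr_norml; lra.
  apply: (@le_lt_trans _ _ (lebesgue_measure (ball q (r * 2) : set (mR R)))).
    apply: le_measure; rewrite ?inE; [exact: measurableI|exact: mb|exact: subIsetr].
  by rewrite lebesgue_measure_ball ?ltry //; lra.
rewrite h4 in h3.
have hr1 : 0 < r < e1 by apply/andP; split.
have hr2 : 0 < r * 2 < e2 by apply/andP; split => //; lra.
have h1 := He1 r hr1.
have h2 := He2 (r * 2) hr2.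
move: h1 h2 h3; rewrite !mulr2n; lra.
Qed.

Theorem mainTheorem19 (R : realType) (N : nat) (x : R)
    (hN : (0 < N)%N) (hx : irrationalT x) :
  (MdT (Dset N x) <= ((N.+1%:R)^-1)%:E)%E /\
  ~ (exists A : set (measurableTypeR R),
        admissible (Dset N x) A /\ lebesgue_measure A = ((N.+1%:R)^-1)%:E).
Proof.
split.
  apply: ge_ereal_sup => _ [A adm <-].
  have [e _] := adm_fin adm; rewrite e lee_fin.
  have := part1 adm; rewrite -(mulr_natr (fine _)) => h.
  by rewrite -div1r ler_pdivlMr // ltr0n.
by move=> [A [adm hA]]; exact: part2 hN hx adm hA.
Qed.
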